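(* Let $u,v\in U^I_{\min}$. If a monomial $\Lambda^l=\Lambda_1^{l_1}\cdots\Lambda_N^{l_N}$ ($l\in\mathbb{Z}^N$) appears with nonzero coefficient in the Laurent polynomial $D^I_{uv}(\Lambda)$, then $l\in L_u$.
   Context: $p$ prime, $n\ge1$, $d\ge2$, $I\subseteq\{0,\dots,n\}$; ${\bf a}_1,\dots,{\bf a}_N\in\mathbb{N}^{n+1}$ with coordinate sums $d$, ${\bf a}_j^+=({\bf a}_j,1)\in\mathbb{N}^{n+2}$. $\mu_I$: $\lceil|I|/d\rceil=\mu_I+1$. $U^I_{\min}$: the set of $u\in\mathbb{N}^{n+2}$ with $\sum_{i=0}^nu_i=du_{n+1}$, $u_i>0$ for $i\in I$, and $u_{n+1}=\mu_I+1$. Hypothesis: $N\ge\mu_I+|U^I_{\min}|$ and for each $u\in U^I_{\min}$ there is $k_u$, $1\le k_u\le|U^I_{\min}|$, with $u={\bf a}^+_{\mu_I+k_u}+\sum_{j=1}^{\mu_I}{\bf a}_j^+$. Define $A^I_{uv}(\Lambda)=(-1)^{\mu_I+1}\sum_{\nu\in\mathbb{N}^N,\ \sum_j\nu_j{\bf a}_j^+=pu-v}\Lambda^\nu/(\nu_1!\cdots\nu_N!)$ and $$D^I_{uv}(\Lambda)=\Big(\prod_{j=1}^{\mu_I}\Lambda_j\Big)^{-(p-1)}\Lambda_{\mu_I+k_u}^{-p}\Lambda_{\mu_I+k_v}A^I_{uv}(\Lambda).$$ $L_u$ is the set of $l\in\mathbb{Z}^N$ with $\sum_{k=1}^Nl_k{\bf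 a}_k^+={\bf 0}$, $l_j\le0$ for $j=1,\dots,\mu_I$ and $j=\mu_I+k_u$, and $l_j\ge0$ otherwise. *)

(* Defs.v *)
From mathcomp Require Import all_boot all_order all_algebra.
Set Implicit Arguments. Unset Strict Implicit. Unset Printing Implicit Defensive.
Import Order.TTheory GRing.Theory Num.Theory.
Local Open Scope ring_scope.

(* Conventions: coordinates 0..n+1 of N^{n+2} are 'I_n.+2 (coordinate n+1 is
   ord_max); the paper's indices j = 1..N of a_j are shifted to 0-based
   'I_N, i.e. paper index j corresponds to j-1. *)

Definition ceil_div (m d : nat) : nat := ((m + d.-1) %/ d)%N.

Definition aplus (n N : nat) (a : 'I_N -> 'I_n.+1 -> nat) (j : 'I_N)
  (i : 'I_n.+2) : nat :=
  if (i < n.+1)%N then a j (inord i) else 1%N.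

(* a_j^+ for a 0-based natural index j (0 if j >= N; never used then) *)
Definition aplus_at (n N : nat) (a : 'I_N -> 'I_n.+1 -> nat) (j : nat)
  (i : 'I_n.+2) : nat :=
  match @insub _ (fun x : nat => (x < N)%N) 'I_N j with
  | Some j' => aplus a j' i
  | None => 0%N
  end.

(* Exponent vectors u in N^{n+2}; for u in U^I_min every coordinate is
   bounded by d*(mu+1) (they sum, on 0..n, to d*u_{n+1} = d*(mu+1)), so this
   finite type contains all of U^I_min. *)
Definition expvec (n d mu : nat) := {ffun 'I_n.+2 -> 'I_(d * mu.+1).+1}.

Definition Umin (n d mu : nat) (I : {set 'I_n.+1}) : {set expvec n d mu} :=
  [set u : expvec n d mu |
    [&& (\sum_(i < n.+2 | (i < n.+1)%N) (u i : nat) == d * u ord_max)%N,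
        [forall i : 'I_n.+1, (i \in I) ==> (0 < u (widen_ord (leqnSn _) i))%N]
      & ((u ord_max : nat) == mu.+1)]].

(* Laurent polynomials in Lambda_1..Lambda_N over Q, as coefficient functions
   on exponent vectors l in Z^N (l : 'I_N -> int). *)
Definition laurent (N : nat) := ('I_N -> int) -> rat.

Definition lmulmon (N : nat) (m : 'I_N -> int) (f : laurent N) : laurent N :=
  fun l => f (fun j => l j - m j).

Definition unitexp (N : nat) (k : nat) (c : int) : 'I_N -> int :=
  fun j => if (j : nat) == k :> nat then c else 0.

(* A^I_{uv}(Lambda) = (-1)^{mu+1} sum_{nu in N^N, sum_j nu_j a_j^+ = p u - v}
   Lambda^nu / (nu_1! ... nu_N!).  Distinct nu give distinct monomials, so the
   coefficient of Lambda^l is the term with nu = l, if l is such a nu. *)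
Definition Acoef (n N p mu : nat) (a : 'I_N -> 'I_n.+1 -> nat)
  (u v : 'I_n.+2 -> nat) : laurent N :=
  fun l =>
    if [forall j, (0 <= l j)%R] &&
       [forall i : 'I_n.+2,
          ((\sum_j `|l j| * aplus a j i)%N%:Z == (p * u i)%N%:Z - (v i)%:Z)%R]
    then ((-1) ^+ mu.+1 / ((\prod_j (`|l j|)`!)%N)%:R)%R
    else 0%R.

(* D^I_{uv} = (prod_{j=1}^{mu} Lambda_j)^{-(p-1)} Lambda_{mu+k_u}^{-p}
              Lambda_{mu+k_v} A^I_{uv}   (paper indices, 1-based) *)
Definition Dcoef (n N p mu : nat) (a : 'I_N -> 'I_n.+1 -> nat)
  (u v : 'I_n.+2 -> nat) (ku kv : nat) : laurent N :=
  lmulmon (fun j : 'I_N => if (j < mu)%N then (- (p%:Z - 1))%R else 0%R)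
   (lmulmon (@unitexp N (mu + ku).-1 (- p%:Z)%R)
    (lmulmon (@unitexp N (mu + kv).-1 1%R)
     (Acoef p mu a u v))).

Definition inL (n N mu : nat) (a : 'I_N -> 'I_n.+1 -> nat) (ku : nat)
  (l : 'I_N -> int) : Prop :=
  (forall i : 'I_n.+2, (\sum_k l k * (aplus a k i)%:Z = 0)%R) /\
  (forall j : 'I_N, ((j < mu)%N \/ (j : nat) = (mu + ku).-1) -> (l j <= 0)%R) /\
  (forall j : 'I_N, ~ ((j < mu)%N \/ (j : nat) = (mu + ku).-1) -> (0 <= l j)%R).

(* Main.v *)
Require Import Defs.
From mathcomp Require Import all_boot all_order all_algebra.
From mathcomp Require Import zify.
Import GRing.Theory Num.Theory.
Set Implicit Arguments. Unset Strict Implicit.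

Lemma sum_lt_max n (F : 'I_n.+2 -> nat) :
  (\sum_(i < n.+2 | (i < n.+1)%N) F i = \sum_(i < n.+1) F (widen_ord (leqnSn _) i))%N.
Proof.
rewrite big_mkcond big_ord_recr /= ltnn addn0.
by apply: eq_bigr => i _; rewrite /= ltn_ord.
Qed.

Lemma sum_bool_card n (I : {set 'I_n}) : (\sum_(i < n) (i \in I : nat))%N = #|I|.
Proof.
rewrite -sum1_card [RHS]big_mkcond /=; apply: eq_bigr => i _; by case: (i \in I).
Qed.

Lemma le_term N (P : pred 'I_N) (F : 'I_N -> nat) j : P j -> (F j <= \sum_(k | P k) F k)%N.
Proof. by move=> Pj; rewrite (bigD1 j) //= leq_addr. Qed.

Lemma le_term0 N (F : 'I_N -> nat) j : (F j <= \sum_k F k)%N.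
Proof. by rewrite (bigD1 j) //= leq_addr. Qed.

Lemma aplus_at_ok n N (a : 'I_N -> 'I_n.+1 -> nat) j (H : (j < N)%N) i :
  aplus_at a j i = aplus a (Ordinal H) i.
Proof. rewrite /aplus_at insubT /=. congr aplus; exact: val_inj. Qed.

Lemma aplus_widen n N (a : 'I_N -> 'I_n.+1 -> nat) j (i : 'I_n.+1) :
  aplus a j (widen_ord (leqnSn _) i) = a j i.
Proof. by rewrite /aplus /= ltn_ord inord_val. Qed.

Lemma small_w n d mu (I : {set 'I_n.+1}) (i0 : 'I_n.+1) :
  (1 <= n)%N -> (1 <= d)%N -> (#|I| <= d * mu.+1)%N ->
  exists2 w, w \in @Umin n d mu I & (w (widen_ord (leqnSn _) i0) <= 1)%N.
Proof.
move=> n1 d1 HI.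
pose I1 : 'I_n.+1 := inord (i0 == 0%N :> nat).
have hI1 : (I1 : nat) = (i0 == 0%N :> nat).
  by rewrite inordK //; case: (_ == _); lia.
pose M := (d * mu.+1)%N.
pose g (i : 'I_n.+1) : nat := if i == I1 then (M - #|I| + (I1 \in I))%N else (i \in I : nat).
pose wf (i : 'I_n.+2) : nat := if (i < n.+1)%N then g (inord i) else mu.+1.
have cI : ((I1 \in I) <= #|I|)%N by rewrite (cardD1 I1 I) leq_addr.
have wfb : forall i, (wf i < M.+1)%N.
  move=> i; rewrite /wf /g; case: ifP => _; [case: ifP => _ |].
  - move: cI; rewrite /M; case: (I1 \in I) => /=; lia.
  - rewrite /M; case: (_ \in _) => /=; nia.
  - rewrite /M; nia.
pose w : expvec n d mu := [ffun i => inord (wf i)].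
have wE : forall i, (w i : nat) = wf i by move=> i; rewrite ffunE inordK.
exists w.
- rewrite inE; apply/and3P; split.
  + rewrite sum_lt_max.
    have -> : (\sum_(i < n.+1) (w (widen_ord (leqnSn n.+1) i) : nat) = \sum_(i < n.+1) g i)%N.
      by apply: eq_bigr => i _; rewrite wE /wf /= ltn_ord inord_val.
    rewrite wE /wf /= ltnn (bigD1 I1) //= /g eqxx.
    have -> : (\sum_(i < n.+1 | i != I1) (if i == I1 then (M - #|I| + (I1 \in I))%N else (i \in I : nat))
               = \sum_(i < n.+1 | i != I1) (i \in I : nat))%N.
      by apply: eq_bigr => i /negbTE ->.
    have := @sum_bool_card _ I; rewrite (bigD1 I1) //= => hs.
    by rewrite -addnA hs subnK.
  + apply/forallP => i; apply/implyP => iI.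
    rewrite wE /wf /= ltn_ord inord_val /g; case: eqP => [e|_]; last by rewrite iI. by rewrite -e iI addn1.
  + by rewrite wE /wf /= ltnn.
- rewrite wE /wf /= ltn_ord inord_val /g.
  case: eqP => [h|_]; last by case: (_ \in _).
  have := congr1 val h; rewrite /= hI1; case: (i0 : nat) => //.
Qed.

Lemma sum_unitexp N (k : nat) (H : (k < N)%N) (c : int) (A : 'I_N -> int) :
  (\sum_j @unitexp N k c j * A j = c * A (Ordinal H))%R.
Proof.
rewrite (bigD1 (Ordinal H)) //= /unitexp eqxx big1 ?addr0 //.
move=> j hj; case: eqP => [e|]; last by rewrite mul0r.
by case/eqP: hj; apply: val_inj.
Qed.

Unset Implicit Arguments.
Theorem lemma7p5 (p n d N : nat) (I : {set 'I_n.+1})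
  (a : 'I_N -> 'I_n.+1 -> nat) (mu : nat) (k : expvec n d mu -> nat)
  (u v : expvec n d mu) :
  prime p -> (1 <= n)%N -> (2 <= d)%N ->
  (forall j : 'I_N, (\sum_(i < n.+1) a j i)%N = d) ->
  ceil_div #|I| d = mu.+1 ->
  (mu + #|@Umin n d mu I| <= N)%N ->
  (forall w, w \in @Umin n d mu I ->
     (1 <= k w <= #|@Umin n d mu I|)%N /\
     forall i : 'I_n.+2,
       (w i : nat) = (aplus_at a (mu + k w).-1 i
                      + \sum_(j < N | (j < mu)%N) aplus a j i)%N) ->
  u \in @Umin n d mu I -> v \in @Umin n d mu I ->
  forall l : 'I_N -> int,
    Dcoef p mu a (fun i => u i : nat) (fun i => v i : nat) (k u) (k v) l != 0%R ->
    inL mu a (k u) l.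
Proof.
move=> pr n1 d2 Hd Hceil HN Hk Hu Hv l Hcoef.
have [Iup Ilow] : (#|I| <= d * mu.+1)%N /\ (d * mu < #|I|)%N.
  move: Hceil; rewrite /ceil_div => Hc; split.
  - have := leq_trunc_div (#|I| + d.-1) d; rewrite Hc; lia.
  - have := ltn_ceil (#|I| + d.-1) (ltn_trans (isT : 0 < 1)%N d2); rewrite Hc.
    rewrite mulnC; lia.
have [/andP [ku1 ku2] Hu_eq] := Hk u Hu.
have [/andP [kv1 kv2] Hv_eq] := Hk v Hv.
have hku : ((mu + k u).-1 < N)%N by lia.
have hkv : ((mu + k v).-1 < N)%N by lia.
pose Ku := Ordinal hku. pose Kv := Ordinal hkv.
pose S (i : 'I_n.+2) := (\sum_(j < N | (j < mu)%N) aplus a j i)%N.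
have Hu' : forall i, (u i : nat) = (aplus a Ku i + S i)%N.
  by move=> i; rewrite Hu_eq (aplus_at_ok a hku).
have Hv' : forall i, (v i : nat) = (aplus a Kv i + S i)%N.
  by move=> i; rewrite Hv_eq (aplus_at_ok a hkv).
move: Hu Hv => /[dup] Hu0 Hu /[dup] Hv0 Hv.
move: Hu; rewrite inE => /and3P [/eqP HsU /forallP HIU /eqP HmU].
move: Hv; rewrite inE => /and3P [_ /forallP HIV _].
rewrite sum_lt_max HmU in HsU.
pose m1 := (fun j : 'I_N => if (j < mu)%N then (- (p%:Z - 1))%R else 0%R).
pose m2 := @unitexp N (mu + k u).-1 (- p%:Z)%R.
pose m3 := @unitexp N (mu + k v).-1 1%R.
pose nu := (fun j => l j - m1 j - m2 j - m3 j)%R.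
have : Acoef p mu a (fun i => u i : nat) (fun i => v i : nat) nu != 0%R by exact: Hcoef.
rewrite /Acoef; case: ifP => [/andP [/forallP Hpos /forallP Heq] _ | _]; last by rewrite eqxx.
pose nn j := `|nu j|%N.
have Hnn : forall j, l j = ((nn j)%:Z + m1 j + m2 j + m3 j)%R.
  move=> j; have := Hpos j; rewrite /nn /nu; lia.
have HE : forall i, (\sum_j nn j * aplus a j i + v i = p * u i)%N.
  move=> i; have := Heq i; rewrite /nn => /eqP; lia.
have a1 : forall j : 'I_N, (j < mu)%N -> forall i, (a j i <= 1)%N.
  move=> j hj i.
  have [w Hw Hw1] := small_w i n1 (ltnW d2) Iup.
  have [_ Hweq] := Hk w Hw.
  move: Hw1; rewrite Hweq -(aplus_widen a j i).
  have : (aplus a j (widen_ord (leqnSn _) i) <= S (widen_ord (leqnSn _) i))%N := le_term _ hj.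
  move=> h1 h2; exact: leq_trans h1 (leq_trans (leq_addl _ _) h2).
have GA : forall j : 'I_N, (j < mu)%N -> (nn j < p)%N.
  move=> j hj; case: (ltnP (nn j) p) => // Hge; exfalso.
  have key : forall i : 'I_n.+1, ((i \in I) + a j i <= u (widen_ord (leqnSn _) i))%N.
    move=> i; have hA := a1 j hj i; have hI := HIU i.
    have [E0|E1] : a j i = 0%N \/ a j i = 1%N by lia.
    - rewrite E0 addn0; move: hI; case: (i \in I) => //= h; exact: h.
    have h2 : (2 <= u (widen_ord (leqnSn _) i))%N.
      have := HE (widen_ord (leqnSn _) i).
      have := @le_term0 _ (fun k => nn k * aplus a k (widen_ord (leqnSn _) i))%N j.
      have : (aplus a j (widen_ord (leqnSn _) i) <= S (widen_ord (leqnSn _) i))%N := le_term _ hj.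
      rewrite Hv' aplus_widen E1 /=. nia.
    rewrite E1; case: (i \in I) => /=; lia.
  have : (\sum_(i < n.+1) ((i \in I) + a j i) <= \sum_(i < n.+1) u (widen_ord (leqnSn _) i))%N.
    by apply: leq_sum => i _; exact: key i.
  rewrite big_split /= sum_bool_card Hd HsU; lia.
have GB : (nn Ku < p)%N.
  have hS : (\sum_(i < n.+1) S (widen_ord (leqnSn _) i) < #|I|)%N.
    have : (\sum_(i < n.+1) u (widen_ord (leqnSn _) i) =
            \sum_(i < n.+1) a Ku i + \sum_(i < n.+1) S (widen_ord (leqnSn _) i))%N.
      rewrite -big_split /=; apply: eq_bigr => i _; by rewrite Hu' aplus_widen.
    rewrite HsU Hd; lia.
  have : ~~ [forall i : 'I_n.+1, (i \in I) <= S (widen_ord (leqnSn _) i)]%N.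
    apply/negP => /forallP H.
    have : (\sum_(i < n.+1) (i \in I : nat) <= \sum_(i < n.+1) S (widen_ord (leqnSn _) i))%N.
      by apply: leq_sum => i _; exact: H i.
    rewrite sum_bool_card; lia.
  move/forallPn => [i0]; rewrite -ltnNge => Hi0.
  have i0I : i0 \in I by move: Hi0; case: (i0 \in I).
  have S0 : S (widen_ord (leqnSn _) i0) = 0%N by move: Hi0; rewrite i0I; lia.
  have := HIU i0; have := HIV i0; rewrite i0I /= => hv hu.
  have := HE (widen_ord (leqnSn _) i0).
  have := @le_term0 _ (fun k => nn k * aplus a k (widen_ord (leqnSn _) i0))%N Ku.
  move: hu; rewrite Hu' S0 addn0 => hu.
  nia.
split; last split.
- move=> i.
  under eq_bigr do rewrite Hnn.
  have -> : forall F1 F2 F3 F4 : 'I_N -> int, forall G : 'I_N -> int,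
     (\sum_k (F1 k + F2 k + F3 k + F4 k) * G k =
      \sum_k F1 k * G k + \sum_k F2 k * G k + \sum_k F3 k * G k + \sum_k F4 k * G k)%R.
    by move=> F1 F2 F3 F4 G; rewrite -!big_split /=; apply: eq_bigr => j _; rewrite !GRing.mulrDl.
  rewrite /m2 /m3 !sum_unitexp -/Ku -/Kv.
  have s1 : (\sum_k (nn k)%:Z * (aplus a k i)%:Z = (\sum_k nn k * aplus a k i)%N%:Z)%R.
    by rewrite (big_morph Posz PoszD (erefl _)); apply: eq_bigr => j _; rewrite PoszM.
  have s2 : (\sum_k m1 k * (aplus a k i)%:Z = - (p%:Z - 1) * (S i)%:Z)%R.
    rewrite /S (big_morph Posz PoszD (erefl _)) big_distrr /= [in RHS]big_mkcond /=.
    by apply: eq_bigr => j _; rewrite /m1; case: ifP => _; rewrite ?GRing.mul0r.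
  rewrite s1 s2; have := HE i; have := Hu' i; have := Hv' i.
  nia.
- move=> j hj.
  have hb : (nn j < p)%N.
    case: hj => [h|h]; first exact: GA j h.
    have -> : j = Ku by apply: val_inj.
    exact: GB.
  rewrite Hnn /m1 /m2 /m3 /unitexp.
  move: hj; case: ifP => ?; case: ifP => /eqP ?; case: ifP => /eqP ?; lia.
- move=> j hj.
  rewrite Hnn /m1 /m2 /m3 /unitexp.
  move: hj; case: ifP => ?; case: ifP => /eqP ?; case: ifP => /eqP ?; lia.
Qed.
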